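(* Let $\mathcal U_n$ be the group of unitary operators on $\mathbb C^n$ and $\mathcal D_n=\{e^{ic}I: c\in\mathbb R\}$ its subgroup of scalar unitaries. Then $D(U,V)$ depends only on the cosets $U\mathcal D_n$ and $V\mathcal D_n$, and the induced function $D:(\mathcal U_n/\mathcal D_n)\times(\mathcal U_n/\mathcal D_n)\to\mathbb R$ is a metric on the quotient group $\mathcal U_n/\mathcal D_n$.
   Context: For unitary operators $U,V$ on $\mathbb C^n$ (standard inner product) define the u-distance $D(U,V)=\max_{\|\psi\|=1}\big(1-|\langle\psi,U^\dagger V\psi\rangle|^2\big)^{1/2}=\big(1-\min_{\|\psi\|=1}|\langle\psi,U^\dagger V\psi\rangle|^2\big)^{1/2}$. *)

(* Defs.v *)
From HB Require Import structures.
From mathcomp Require Import all_boot all_order all_algebra.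
From mathcomp Require Import complex.
From mathcomp Require Import all_classical all_reals.
From mathcomp Require Import trigo.
Set Implicit Arguments. Unset Strict Implicit. Unset Printing Implicit Defensive.
Import Order.TTheory GRing.Theory Num.Theory.
Local Open Scope ring_scope.
Local Open Scope classical_set_scope.

Section UDist.
Variable R : realType.
Variable n : nat.

Definition adjmx (m p : nat) (A : 'M[R[i]]_(m, p)) : 'M[R[i]]_(p, m) :=
  (map_mx (@conjc R) A)^T.

Definition cinner (psi phi : 'cV[R[i]]_n) : R[i] :=
  (adjmx psi *m phi) 0 0.

Definition cnorm (psi : 'cV[R[i]]_n) : R :=
  Num.sqrt (\sum_(k < n) ComplexField.Normc.normc (psi k 0) ^+ 2).

Definition unitary (U : 'M[R[i]]_n) : Prop :=
  adjmx U *m U = 1%:M /\ U *m adjmx U = 1%:M.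

Definition expi (c : R) : R[i] := (cos c +i* sin c)%C.

(* u-distance: D(U,V) = max_{||psi||=1} (1 - |<psi, U^dag V psi>|^2)^{1/2},
   the maximum being written as a supremum (it is attained by compactness). *)
Definition udist (U V : 'M[R[i]]_n) : R :=
  sup [set Num.sqrt (1 - ComplexField.Normc.normc (cinner psi ((adjmx U *m V) *m psi)) ^+ 2)
      | psi in [set psi : 'cV[R[i]]_n | cnorm psi = 1]].

End UDist.

(* Main.v *)
Require Import Defs.
From HB Require Import structures.
From mathcomp Require Import all_boot all_order all_algebra.
From mathcomp Require Import complex.
From mathcomp Require Import all_classical all_reals.
From mathcomp Require Import trigo.
From mathcomp Require Import ring lra.
Import Order.TTheory GRing.Theory Num.Theory.
Local Open Scope ring_scope.

Local Open Scope complex_scope.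
Local Open Scope ring_scope.

Local Notation normc := ComplexField.Normc.normc.


Section Helpers.
Variable R : realType.
Variable n : nat.
Implicit Types (x y z u v w : 'cV[R[i]]_n) (A B U V W : 'M[R[i]]_n).

Lemma normCE (z : R[i]) : `|z| = (normc z)%:C. Proof. by []. Qed.

Lemma realCX2 (r : R) : ((r ^+ 2)%:C : R[i]) = r%:C ^+ 2.
Proof. by rewrite rmorphXn. Qed.

Lemma normc_ge0 (z : R[i]) : 0 <= normc z.
Proof. by case: z => a b /=; rewrite sqrtr_ge0. Qed.

Lemma adjmxE m p (A : 'M[R[i]]_(m, p)) i j : adjmx A i j = (A j i)^*.
Proof. by rewrite /adjmx !mxE. Qed.

Lemma adjmxK m p (A : 'M[R[i]]_(m, p)) : adjmx (adjmx A) = A.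
Proof. by apply/matrixP => i j; rewrite !adjmxE conjCK. Qed.

Lemma adjmxM m p q (A : 'M[R[i]]_(m, p)) (B : 'M[R[i]]_(p, q)) :
  adjmx (A *m B) = adjmx B *m adjmx A.
Proof. by rewrite /adjmx map_mxM trmx_mul. Qed.

Lemma adjmx_scalar (a : R[i]) : adjmx (a%:M : 'M[R[i]]_n) = (a^*)%:M.
Proof.
apply/matrixP => i j; rewrite adjmxE !mxE eq_sym.
by case: (i == j); rewrite /= ?mulr1n ?mulr0n ?conjC0.
Qed.

Lemma cinnerE x y : cinner x y = \sum_k (x k 0)^* * y k 0.
Proof. by rewrite /cinner !mxE; apply: eq_bigr => k _; rewrite adjmxE. Qed.

Lemma cinnerC x y : cinner y x = (cinner x y)^*.
Proof.
rewrite !cinnerE rmorph_sum; apply: eq_bigr => k _.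
by rewrite rmorphM /= conjCK mulrC.
Qed.

Lemma cinnerDr x y z : cinner x (y + z) = cinner x y + cinner x z.
Proof. by rewrite !cinnerE -big_split; apply: eq_bigr => k _; rewrite mxE mulrDr. Qed.

Lemma cinnerZr x y a : cinner x (a *: y) = a * cinner x y.
Proof.
rewrite !cinnerE mulr_sumr; apply: eq_bigr => k _.
by rewrite mxE mulrCA.
Qed.

Lemma cinnerNr x y : cinner x (- y) = - cinner x y.
Proof. by rewrite -scaleN1r cinnerZr mulN1r. Qed.

Lemma cinnerBr x y z : cinner x (y - z) = cinner x y - cinner x z.
Proof. by rewrite cinnerDr cinnerNr. Qed.

Lemma cinnerDl x y z : cinner (y + z) x = cinner y x + cinner z x.
Proof. by rewrite cinnerC cinnerDr rmorphD /= -!cinnerC. Qed.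

Lemma cinnerZl x y a : cinner (a *: y) x = a^* * cinner y x.
Proof. by rewrite cinnerC cinnerZr rmorphM /= -cinnerC. Qed.

Lemma cinnerBl x y z : cinner (y - z) x = cinner y x - cinner z x.
Proof. by rewrite cinnerC cinnerBr rmorphB /= -!cinnerC. Qed.

Lemma cinner_mx x y A : cinner x (A *m y) = cinner (adjmx A *m x) y.
Proof. by rewrite /cinner adjmxM adjmxK mulmxA. Qed.

Lemma cinner_normE x : cinner x x = \sum_k `|x k 0| ^+ 2.
Proof. by rewrite cinnerE; apply: eq_bigr => k _; rewrite sqr_normc mulrC. Qed.

Lemma cinner_ge0 x : 0 <= cinner x x.
Proof. by rewrite cinner_normE sumr_ge0 // => k _; rewrite exprn_ge0. Qed.

Lemma cinner_eq0 x : cinner x x = 0 -> x = 0.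
Proof.
rewrite cinner_normE => /eqP; rewrite psumr_eq0 => [|k _]; last by rewrite exprn_ge0.
move=> /allP H; apply/matrixP => i j; rewrite (ord1 j) mxE.
have /H : i \in index_enum 'I_n by rewrite mem_index_enum.
by rewrite /= expf_eq0 /= normr_eq0 => /eqP.
Qed.

Lemma cnorm_cinner x : cinner x x = ((cnorm x) ^+ 2)%:C.
Proof.
rewrite /cnorm sqr_sqrtr; last by rewrite sumr_ge0 // => k _; rewrite exprn_ge0 // normc_ge0.
rewrite cinner_normE raddf_sum; apply: eq_bigr => k _.
by rewrite normCE; exact: (esym (realCX2 _)).
Qed.

Lemma unit_cinner x : cnorm x = 1 -> cinner x x = 1.
Proof. by move=> h; rewrite cnorm_cinner h expr1n. Qed.

Lemma cinner_unit x : cinner x x = 1 -> cnorm x = 1.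
Proof.
rewrite cnorm_cinner => /complexI /eqP; rewrite sqrp_eq1 ?sqrtr_ge0 //.
by move/eqP.
Qed.

End Helpers.

Section Helpers2.
Variable R : realType.
Variable n : nat.
Implicit Types (x y z u v w : 'cV[R[i]]_n) (A B U V W : 'M[R[i]]_n).

Lemma real_fs (a b c g : R) : 0 <= a <= 1 -> 0 <= b <= 1 -> 0 <= c -> 0 <= g ->
  g ^+ 2 <= (1 - a ^+ 2) * (1 - b ^+ 2) -> a * b <= c + g ->
  Num.sqrt (1 - c ^+ 2) <= Num.sqrt (1 - a ^+ 2) + Num.sqrt (1 - b ^+ 2).
Proof.
move=> /andP[a0 a1] /andP[b0 b1] c0 g0 hg hab.
have a21 : a ^+ 2 <= 1 by rewrite expr_le1.
have b21 : b ^+ 2 <= 1 by rewrite expr_le1.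
have [s [s2 s0 ->]] : exists s : R, [/\ s ^+ 2 = 1 - a ^+ 2, 0 <= s & Num.sqrt (1 - a ^+ 2) = s].
  by exists (Num.sqrt (1 - a ^+ 2)); rewrite sqr_sqrtr ?sqrtr_ge0 // subr_ge0.
have [t [t2 t0 ->]] : exists t : R, [/\ t ^+ 2 = 1 - b ^+ 2, 0 <= t & Num.sqrt (1 - b ^+ 2) = t].
  by exists (Num.sqrt (1 - b ^+ 2)); rewrite sqr_sqrtr ?sqrtr_ge0 // subr_ge0.
have gst : g <= s * t.
  have hst : 0 <= s * t by rewrite mulr_ge0.
  have e : (s * t) ^+ 2 = (1 - a ^+ 2) * (1 - b ^+ 2) by rewrite exprMn s2 t2.
  rewrite -e in hg; move: hg; rewrite !expr2 => hg; nra.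
have key : 1 - c ^+ 2 <= (s + t) ^+ 2.
  case: (lerP (a * b) (s * t)) => h.
    have h2 : (a * b) ^+ 2 <= (s * t) ^+ 2.
      by rewrite ler_pXn2r // ?nnegrE // mulr_ge0.
    rewrite !exprMn s2 t2 in h2.
    have : 0 <= s * t by rewrite mulr_ge0.
    have : 0 <= c ^+ 2 by rewrite sqr_ge0.
    move: s2 t2; rewrite !expr2 => s2 t2; move: h2; rewrite !expr2 => h2.
    nra.
  have hc : a * b - s * t <= c by lra.
  have hc2 : (a * b - s * t) ^+ 2 <= c ^+ 2.
    by rewrite ler_pXn2r // ?nnegrE // subr_ge0 ltW.
  have id : (a * b - s * t) ^+ 2 + (s * b + t * a) ^+ 2 = 1.
    have -> : (a * b - s * t) ^+ 2 + (s * b + t * a) ^+ 2 =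
      (a ^+ 2 + s ^+ 2) * (b ^+ 2 + t ^+ 2) by ring.
    by rewrite s2 t2 !subrKC mulr1.
  have h3 : s * b + t * a <= s + t.
    by rewrite lerD // ler_piMr.
  have h4 : (s * b + t * a) ^+ 2 <= (s + t) ^+ 2.
    by rewrite ler_pXn2r // ?nnegrE // ?addr_ge0 // mulr_ge0.
  lra.
rewrite -[leRHS]ger0_norm ?addr_ge0 // -sqrtr_sqr ler_sqrt //.
by rewrite sqr_ge0.
Qed.

Lemma cauchy_schwarz u v : `|cinner u v| ^+ 2 <= cinner u u * cinner v v.
Proof.
have [u0|nu0] := eqVneq (cinner u u) 0.
  have -> : u = 0 by apply: cinner_eq0.
  have c0 : forall w, cinner 0 w = 0.
    by move=> w; rewrite cinnerE big1 // => k _; rewrite mxE conjC0 mul0r.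
  by rewrite !c0 normr0 expr0n mul0r.
have Npos : 0 < cinner u u by rewrite lt_def nu0 cinner_ge0.
set N := cinner u u; set b := cinner u v.
have NJ : N^* = N by rewrite /N -cinnerC.
have H := @cinner_ge0 _ _ (N *: v - b *: u).
rewrite cinnerBl !cinnerBr !cinnerZl !cinnerZr [cinner v u]cinnerC -/N -/b NJ in H.
have : 0 <= N * (N * cinner v v - `|b| ^+ 2).
  by move: H; rewrite sqr_normc; congr (0 <= _); ring.
by rewrite pmulr_rge0 // subr_ge0.
Qed.

End Helpers2.

Section Helpers3.
Variable R : realType.
Variable n : nat.
Implicit Types (x y z u v w : 'cV[R[i]]_n) (A B U V W : 'M[R[i]]_n).

Lemma CB1 (r : R) : 1 - r%:C = (1 - r)%:C :> R[i].
Proof. by rewrite rmorphB rmorph1. Qed.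
Lemma CM (r s : R) : r%:C * s%:C = (r * s)%:C :> R[i].
Proof. by rewrite rmorphM. Qed.
Lemma CD (r s : R) : r%:C + s%:C = (r + s)%:C :> R[i].
Proof. by rewrite rmorphD. Qed.
Lemma C1 : 1 = (1 : R)%:C :> R[i]. Proof. by []. Qed.

Lemma normc_le1 x y : cinner x x = 1 -> cinner y y = 1 -> normc (cinner x y) <= 1.
Proof.
move=> hx hy; have := @cauchy_schwarz R n x y; rewrite hx hy mulr1 normCE -realCX2.
by rewrite C1 lecR expr_le1 // normc_ge0.
Qed.

Lemma fs_tri x y z : cinner x x = 1 -> cinner y y = 1 -> cinner z z = 1 ->
  Num.sqrt (1 - normc (cinner x z) ^+ 2) <=
  Num.sqrt (1 - normc (cinner x y) ^+ 2) + Num.sqrt (1 - normc (cinner y z) ^+ 2).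
Proof.
move=> hx hy hz.
set al := cinner y x; set be := cinner y z.
have xy : cinner x y = al^* by rewrite /al -cinnerC.
have zy : cinner z y = be^* by rewrite /be -cinnerC.
have e1 : cinner (x - al *: y) (z - be *: y) = cinner x z - al^* * be.
  by rewrite cinnerBl !cinnerBr !cinnerZl !cinnerZr hy xy -/be; ring.
have e2 : cinner (x - al *: y) (x - al *: y) = 1 - al^* * al.
  by rewrite cinnerBl !cinnerBr !cinnerZl !cinnerZr hy hx xy -/al; ring.
have e3 : cinner (z - be *: y) (z - be *: y) = 1 - be^* * be.
  by rewrite cinnerBl !cinnerBr !cinnerZl !cinnerZr hy hz zy -/be; ring.
have cs := @cauchy_schwarz R n (x - al *: y) (z - be *: y).
rewrite e1 e2 e3 in cs.
have a_eq : normc (cinner x y) = normc al.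
  by apply: complexI; rewrite -!normCE xy normcJ.
have ea : al^* * al = ((normc al) ^+ 2)%:C.
  by rewrite mulrC -sqr_normc normCE realCX2.
have eb : be^* * be = ((normc be) ^+ 2)%:C.
  by rewrite mulrC -sqr_normc normCE realCX2.
rewrite ea eb !CB1 CM normCE -realCX2 lecR in cs.
rewrite a_eq.
apply: (@real_fs R _ _ _ (normc (cinner x z - al^* * be))).
- by rewrite normc_ge0 -a_eq normc_le1.
- by rewrite normc_ge0 normc_le1.
- exact: normc_ge0.
- exact: normc_ge0.
- exact: cs.
- rewrite -lecR -CM -CD -!normCE.
  have := ler_normB (cinner x z) (cinner x z - al^* * be).
  by rewrite opprB addrC subrK normrM normcJ.
Qed.

End Helpers3.

Local Open Scope classical_set_scope.


Section Helpers4.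
Variable R : realType.
Variable n : nat.
Implicit Types (x y z u v w psi : 'cV[R[i]]_n) (A B M U V W : 'M[R[i]]_n).

Definition fval U V psi : R :=
  Num.sqrt (1 - normc (cinner psi ((adjmx U *m V) *m psi)) ^+ 2).

Lemma udistE U V : udist U V = sup [set fval U V psi | psi in [set psi | cnorm psi = 1]].
Proof. by []. Qed.

Lemma udist_ge U V psi : cnorm psi = 1 -> fval U V psi <= udist U V.
Proof.
move=> hp; rewrite udistE; apply: ub_le_sup; last by exists psi.
exists 1 => _ [p _ <-]; rewrite /fval -[X in _ <= X]sqrtr1 ler_sqrt ?ler01 //.
by rewrite gerBl sqr_ge0.
Qed.

Lemma sup_img_le (T : Type) (f : T -> R) (P : set T) r : 0 <= r ->
  (forall p, P p -> f p <= r) -> sup [set f p | p in P] <= r.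
Proof.
move=> r0 h.
have [->|/set0P ne] := eqVneq [set f p | p in P] set0; first by rewrite sup0.
by apply: ge_sup => // _ [p hp <-]; exact: h.
Qed.

Lemma sup_img_ge0 (T : Type) (f : T -> R) (P : set T) :
  (forall p, P p -> 0 <= f p) -> has_ubound [set f p | p in P] ->
  0 <= sup [set f p | p in P].
Proof.
move=> h hb.
have [->|/set0P [x [p hp px]]] := eqVneq [set f p | p in P] set0; first by rewrite sup0.
apply: le_trans (h p hp) _; apply: ub_le_sup => //; by exists p.
Qed.

Lemma udist_le U V r : 0 <= r -> (forall psi, cnorm psi = 1 -> fval U V psi <= r) ->
  udist U V <= r.
Proof. by move=> r0 h; rewrite udistE; apply: sup_img_le. Qed.

Lemma udist_ge0 U V : 0 <= udist U V.
Proof.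
rewrite udistE; apply: sup_img_ge0 => [p _|]; first by rewrite sqrtr_ge0.
exists 1 => _ [p _ <-]; rewrite /fval -[X in _ <= X]sqrtr1 ler_sqrt ?ler01 //.
by rewrite gerBl sqr_ge0.
Qed.

Lemma normcJR (z : R[i]) : normc (z^*) = normc z.
Proof. by apply: complexI; exact: normcJ. Qed.

Lemma normc_expi (c : R) : normc (expi c) = 1.
Proof. by rewrite /expi /= cos2Dsin2 sqrtr1. Qed.

Lemma coset_adj (a b : R[i]) U V :
  adjmx (a%:M *m U) *m (b%:M *m V) = (a^* * b) *: (adjmx U *m V).
Proof.
by rewrite adjmxM adjmx_scalar !mul_scalar_mx mul_mx_scalar -scalemxAl -scalemxAr scalerA.
Qed.

Lemma fval_coset U V (c d : R) psi :
  fval ((expi c)%:M *m U) ((expi d)%:M *m V) psi = fval U V psi.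
Proof.
rewrite /fval coset_adj -scalemxAl cinnerZr.
have -> : normc ((expi c)^* * expi d * cinner psi ((adjmx U *m V) *m psi)) =
          normc (cinner psi ((adjmx U *m V) *m psi)).
  by rewrite !ComplexField.Normc.normcM normcJR !normc_expi !mul1r.
by [].
Qed.

Lemma fval_sym U V psi : fval V U psi = fval U V psi.
Proof.
rewrite /fval; congr (Num.sqrt (1 - _ ^+ 2)).
have -> : adjmx V *m U = adjmx (adjmx U *m V) by rewrite adjmxM adjmxK.
by rewrite cinner_mx adjmxK cinnerC normcJR.
Qed.

Lemma cinner_iso M x y : adjmx M *m M = 1%:M -> cinner (M *m x) (M *m y) = cinner x y.
Proof. by move=> h; rewrite cinner_mx mulmxA h mul1mx. Qed.


End Helpers4.

Arguments fval {R n} _ _ _.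
Section Helpers5.
Variable R : realType.
Variable n : nat.
Implicit Types (x y z u v w psi : 'cV[R[i]]_n) (A B M U V W : 'M[R[i]]_n).

Lemma iso_prod A B : A *m adjmx A = 1%:M -> adjmx B *m B = 1%:M ->
  adjmx (adjmx A *m B) *m (adjmx A *m B) = 1%:M.
Proof.
by move=> hA hB; rewrite adjmxM adjmxK -mulmxA (mulmxA A) hA mul1mx hB.
Qed.

Lemma udist_tri U V W : unitary U -> unitary V -> unitary W ->
  udist U W <= udist U V + udist V W.
Proof.
move=> [hU1 hU2] [hV1 hV2] [hW1 hW2].
apply: udist_le; first by rewrite addr_ge0 ?udist_ge0.
move=> psi hp.
set y := (adjmx V *m W) *m psi.
have hx : cinner psi psi = 1 := @unit_cinner _ _ psi hp.
have hy : cinner y y = 1 by rewrite cinner_iso ?iso_prod.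
have ez : (adjmx U *m W) *m psi = (adjmx U *m V) *m y.
  by rewrite /y !mulmxA -(mulmxA _ V) hV2 mulmx1.
have hz : cinner ((adjmx U *m W) *m psi) ((adjmx U *m W) *m psi) = 1.
  by rewrite cinner_iso ?iso_prod.
have h := @fs_tri _ _ _ _ _ hx hy hz.
have e2 : Num.sqrt (1 - normc (cinner y ((adjmx U *m W) *m psi)) ^+ 2) = fval U V y.
  by rewrite ez.
rewrite e2 in h.
apply: (le_trans h); rewrite addrC; apply: lerD.
  by apply: udist_ge; apply: (@cinner_unit R n).
exact: udist_ge.
Qed.

End Helpers5.
Arguments fval {R n} _ _ _.
Arguments normc_ge0 {R}.
Arguments cinner_iso {R n}.
Arguments normc_le1 {R n}.

Section Helpers6.
Variable R : realType.
Variable n : nat.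
Implicit Types (x y z u v w psi : 'cV[R[i]]_n) (A B M U V W : 'M[R[i]]_n).

Lemma cinner_delta j v : cinner (delta_mx j 0) v = v j 0.
Proof.
rewrite cinnerE (bigD1 j) //= mxE !eqxx /= conjC1 mul1r big1 ?addr0 // => k /negbTE hk.
by rewrite mxE hk /= conjC0 mul0r.
Qed.

Lemma eigen_step W psi : adjmx W *m W = 1%:M -> cinner psi psi = 1 ->
  1 - normc (cinner psi (W *m psi)) ^+ 2 <= 0 ->
  W *m psi = cinner psi (W *m psi) *: psi /\ normc (cinner psi (W *m psi)) = 1.
Proof.
move=> hW hp h0.
set mu := cinner psi (W *m psi).
have hWp : cinner (W *m psi) (W *m psi) = 1 by rewrite cinner_iso.
have m1 : normc mu = 1.
  have hle := normc_le1 psi (W *m psi) hp hWp.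
  have m0 := normc_ge0 mu.
  apply: le_anti; rewrite hle /=; move: h0; rewrite expr2 => h0; nra.
have mm : mu^* * mu = 1 by rewrite mulrC -sqr_normc normCE m1 -C1 expr1n.
have d0 : cinner (W *m psi - mu *: psi) (W *m psi - mu *: psi) = 0.
  rewrite cinnerBl !cinnerBr !cinnerZl !cinnerZr hWp hp [cinner (W *m psi) psi]cinnerC -/mu.
  transitivity (1 - mu^* * mu); first by ring.
  by rewrite mm subrr.
split => //; apply/eqP; rewrite -subr_eq0; apply/eqP; exact: (@cinner_eq0 R n).
Qed.

End Helpers6.
Arguments cinner_delta {R n}.
Arguments eigen_step {R n}.

Lemma scalar_of_eigen (R : realType) (m : nat) (W : 'M[R[i]]_m.+1) :
  adjmx W *m W = 1%:M ->
  (forall psi, cinner psi psi = 1 -> 1 - normc (cinner psi (W *m psi)) ^+ 2 <= 0) ->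
  W = (W 0 0)%:M /\ normc (W 0 0) = 1.
Proof.
move=> hW h.
have step psi : cinner psi psi = 1 ->
    W *m psi = cinner psi (W *m psi) *: psi /\ normc (cinner psi (W *m psi)) = 1.
  by move=> hp; apply: eigen_step => //; apply: h.
have hd j : cinner (delta_mx j 0) (delta_mx j 0 : 'cV[R[i]]_m.+1) = 1.
  by rewrite cinner_delta mxE !eqxx.
have ed j : W *m (delta_mx j 0 : 'cV[R[i]]_m.+1) = W j j *: (delta_mx j 0 : 'cV[R[i]]_m.+1).
  have [e _] := step _ (hd j).
  by rewrite {1}e cinner_delta -colE mxE.
have diag j k : j != k -> W j j = W k k.
  move=> jk.
  pose c : R[i] := (Num.sqrt (2^-1))%:C.
  have c0 : c != 0.
    apply/eqP => /complexI /eqP; rewrite sqrtr_eq0.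
    have : 0 < (2:R)^-1 by rewrite invr_gt0 ltr0n.
    by move=> /lt_geF ->.
  have cc : c * c = (2^-1)%:C.
    by rewrite /c CM -expr2 sqr_sqrtr // invr_ge0 ler0n.
  have cJ : c^* = c by exact: conjc_real.
  pose psi := c *: (delta_mx j 0 + delta_mx k 0 : 'cV[R[i]]_m.+1).
  have hp : cinner psi psi = 1.
    rewrite /psi cinnerZl cinnerZr !cinnerDl !cinnerDr !cinner_delta !mxE !eqxx.
    rewrite (negbTE jk) eq_sym (negbTE jk) /= cJ mulrA cc.
    rewrite !addr0 !add0r C1 CD CM; by congr (_ %:C); field.
  have [e _] := step _ hp.
  set mu := cinner psi (W *m psi) in e.
  have ej := congr1 (fun M : 'cV[R[i]]_m.+1 => M j 0) e.
  have ek := congr1 (fun M : 'cV[R[i]]_m.+1 => M k 0) e.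
  move: ej ek; rewrite /psi -scalemxAr mulmxDr !ed /= !mxE !eqxx (negbTE jk) eq_sym (negbTE jk) /=.
  rewrite !mulr1 !mulr0 !addr0 !add0r => ej ek.
  apply: (mulfI c0); rewrite ej ek; ring.
have allW j : W j j = W 0 0.
  by case: (eqVneq j 0) => [->//|jn]; exact: diag.
split.
  apply/matrixP => i j.
  have -> : W i j = (W *m (delta_mx j 0 : 'cV[R[i]]_m.+1)) i 0 by rewrite -colE mxE.
  rewrite ed !mxE allW.
  by case: (i == j); rewrite eqxx /= ?mulr1 ?mulr0.
have [_ e] := step _ (hd 0).
by rewrite cinner_delta -colE mxE in e.
Qed.

Lemma expi_surj (R : realType) (l : R[i]) : normc l = 1 -> exists c : R, expi c = l.
Proof.
case: l => a b /= h.
have hab : a ^+ 2 + b ^+ 2 = 1.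
  by rewrite -(sqr_sqrtr (addr_ge0 (sqr_ge0 a) (sqr_ge0 b))) h expr1n.
have ha : -1 <= a <= 1.
  by move: hab; rewrite !expr2 => hab; apply/andP; split; nra.
have sb : Num.sqrt (1 - a ^+ 2) = `|b|.
  by rewrite -hab addrC addKr sqrtr_sqr.
have [_ cc] := acos_def ha.
case: (lerP 0 b) => hb.
  by exists (acos a); rewrite /expi cc sin_acos // sb ger0_norm //.
by exists (- acos a); rewrite /expi cosN sinN cc sin_acos // sb ltr0_norm // opprK.
Qed.
Arguments fval {R n} _ _ _.
Arguments unit_cinner {R n x}.
Arguments cinner_unit {R n x}.
Arguments udist_ge {R n}.
Arguments udist_ge0 {R n}.
Arguments udist_le {R n}.
Arguments iso_prod {R n}.
Arguments fval_coset {R n}.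
Arguments fval_sym {R n}.
Arguments udist_tri {R n}.
Arguments scalar_of_eigen {R m W}.
Arguments expi_surj {R l}.

Lemma udist_scalar (R : realType) (n : nat) (U : 'M[R[i]]_n) (c : R) :
  unitary U -> udist U ((expi c)%:M *m U) = 0.
Proof.
move=> [hU1 _]; apply/le_anti; rewrite udist_ge0 andbT; apply: udist_le => // psi hp.
rewrite /fval mul_scalar_mx -scalemxAr hU1 -scalemxAl mul1mx cinnerZr (unit_cinner hp).
by rewrite mulr1 normc_expi expr1n subrr sqrtr0.
Qed.

Lemma udist_zero (R : realType) (n : nat) (U V : 'M[R[i]]_n) :
  unitary U -> unitary V -> udist U V = 0 -> exists c : R, V = (expi c)%:M *m U.
Proof.
case: n U V => [|m] U V hU hV h0.
  by exists 0; apply/matrixP => -[k hk]; exfalso; move: hk; rewrite ltn0.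
have [hU1 hU2] := hU; have [hV1 hV2] := hV.
have hW : adjmx (adjmx U *m V) *m (adjmx U *m V) = 1%:M by apply: iso_prod.
have hz : forall psi, cinner psi psi = 1 ->
    1 - normc (cinner psi ((adjmx U *m V) *m psi)) ^+ 2 <= 0.
  move=> psi hp; have := udist_ge U V psi (cinner_unit hp); rewrite h0 => hle.
  have : Num.sqrt (1 - normc (cinner psi ((adjmx U *m V) *m psi)) ^+ 2) == 0.
    by rewrite eq_le hle sqrtr_ge0.
  by rewrite sqrtr_eq0.
have VUW : V = U *m (adjmx U *m V) by rewrite mulmxA hU2 mul1mx.
have [hs hn] := scalar_of_eigen hW hz.
have [c hc] := expi_surj hn.
exists c; rewrite hc -hs.
by rewrite {1}VUW hs mul_mx_scalar mul_scalar_mx.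
Qed.

Local Close Scope classical_set_scope.
Local Close Scope complex_scope.
Local Open Scope ring_scope.

Theorem mainTheorem4 (R : realType) (n : nat) :
  (* D depends only on the cosets U D_n and V D_n *)
  (forall (U V : 'M[R[i]]_n) (c d : R), unitary U -> unitary V ->
     udist ((expi c)%:M *m U) ((expi d)%:M *m V) = udist U V) /\
  (* the induced function is a metric on U_n / D_n *)
  (forall U V : 'M[R[i]]_n, unitary U -> unitary V -> 0 <= udist U V) /\
  (forall U V : 'M[R[i]]_n, unitary U -> unitary V ->
     (udist U V = 0 <-> exists c : R, V = (expi c)%:M *m U)) /\
  (forall U V : 'M[R[i]]_n, unitary U -> unitary V -> udist U V = udist V U) /\
  (forall U V W : 'M[R[i]]_n, unitary U -> unitary V -> unitary W ->
     udist U W <= udist U V + udist V W).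
Proof.
split.
  move=> U V c d _ _; rewrite !udistE; congr (sup (image _ _)).
  by apply: funext => psi; exact: fval_coset.
split; first by move=> U V _ _; exact: udist_ge0.
split.
  move=> U V hU hV; split; first exact: udist_zero.
  by move=> [c ->]; exact: udist_scalar.
split.
  move=> U V _ _; rewrite !udistE; congr (sup (image _ _)).
  by apply: funext => psi; rewrite fval_sym.
by move=> U V W; exact: udist_tri.
Qed.
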